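(* Let $p>1$ and $r,s\in(0,1)$. Then (1) $\arcsin_p(rs)\le\sqrt{\arcsin_p(r^2)\arcsin_p(s^2)}\le\arcsin_p(r)\arcsin_p(s)$; (2) $\operatorname{artanh}_p(rs)\le\sqrt{\operatorname{artanh}_p(r^2)\operatorname{artanh}_p(s^2)}\le\operatorname{artanh}_p(r)\operatorname{artanh}_p(s)$; (3) $\operatorname{arsinh}_p(r)\operatorname{arsinh}_p(s)\le\sqrt{\operatorname{arsinh}_p(r^2)\operatorname{arsinh}_p(s^2)}\le\operatorname{arsinh}_p(rs)$; (4) $\arctan_p(r)\arctan_p(s)\le\sqrt{\arctan_p(r^2)\arctan_p(s^2)}\le\arctan_p(rs)$.
   Context: For $p>1$ and $y\in(0,1)$: $\arcsin_p y=\int_0^y(1-t^p)^{-1/p}dt$, $\arctan_p y=\int_0^y(1+t^p)^{-1}dt$, $\operatorname{arsinh}_p y=\int_0^y(1+t^p)^{-1/p}dt$, $\operatorname{artanh}_p y=\int_0^y(1-t^p)^{-1}dt$. *)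

(* Defs.v *)
From HB Require Import structures.
From mathcomp Require Import all_boot all_order all_algebra.
From mathcomp Require Import all_classical all_reals all_analysis.
Set Implicit Arguments. Unset Strict Implicit. Unset Printing Implicit Defensive.
Import Order.TTheory GRing.Theory Num.Theory.
Local Open Scope classical_set_scope.
Local Open Scope ring_scope.

Section GenTrig.
Context {R : realType}.
Notation mu := (@lebesgue_measure R).

Definition arcsin_p (p y : R) : R :=
  Rintegral mu `[0, y] (fun t => (1 - t `^ p) `^ (- p^-1)).
Definition arctan_p (p y : R) : R :=
  Rintegral mu `[0, y] (fun t => (1 + t `^ p)^-1).
Definition arsinh_p (p y : R) : R :=
  Rintegral mu `[0, y] (fun t => (1 + t `^ p) `^ (- p^-1)).
Definition artanh_p (p y : R) : R :=
  Rintegral mu `[0, y] (fun t => (1 - t `^ p)^-1).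
End GenTrig.

(* Main.v *)
Require Import Defs.
From HB Require Import structures.
From mathcomp Require Import all_boot all_order all_algebra.
From mathcomp Require Import all_classical all_reals all_analysis.
From mathcomp Require Import ring lra.
Import Order.TTheory GRing.Theory Num.Theory.
Import numFieldNormedType.Exports.
Local Open Scope classical_set_scope.
Local Open Scope ring_scope.

Notation mu := (@lebesgue_measure _).

Lemma scal_cont {R : realType} (lam x : R) : {for x, continuous (fun y : R => lam * y)}.
Proof. exact: (@continuousM _ _ (cst lam) id x (cvg_cst _) cvg_id). Qed.

Lemma scal_derivable {R : realType} (lam x : R) : derivable (fun x : R => lam * x) x 1.
Proof.
have -> : (fun x : R => lam * x) = (cst lam * id)%R by [].
by apply: derivableM; [exact: derivable_cst| exact: derivable_id].
Qed.

Lemma scal_derive1 {R : realType} (lam : R) : (fun x : R => lam * x)^`()%classic = cst lam.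
Proof.
apply/funext => x; have := @derive1Ml R id x lam (@derivable_id _ _ x 1).
rewrite derive1_id mulr1 => H. exact H.
Qed.

Lemma int_g {R : realType} (g : R -> R) a b :
  (forall t, -1 < t < 1 -> {for t, continuous g}) ->
  -1 < a -> b < 1 -> mu.-integrable `[a, b] (EFin \o g).
Proof.
move=> gc a1 b1; apply: continuous_compact_integrable; first exact: segment_compact.
apply: continuous_in_subspaceT => x; rewrite inE /= in_itv /= => /andP[ax xb].
apply: gc; apply/andP; split; [exact: lt_le_trans ax|exact: le_lt_trans b1].
Qed.

Lemma subst {R : realType} (g : R -> R) (lam a b : R) :
  (forall t, -1 < t < 1 -> {for t, continuous g}) ->
  0 < lam <= 1 -> 0 <= a <= b -> b < 1 ->
  \int[mu]_(x in `[lam * a, lam * b]) g x =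
  \int[mu]_(x in `[a, b]) (g (lam * x) * lam).
Proof.
move=> gc /andP[l0 l1] /andP[a0 ab] b1.
rewrite /Rintegral; congr fine.
rewrite (@integration_by_substitution_increasing _ (fun x => lam * x) g a b ab).
- apply: eq_integral => x _ /=. by rewrite scal_derive1.
- by move=> x y _ _ xy; rewrite ltr_pM2l.
- by rewrite scal_derive1 => x _; exact: cvg_cst.
- by rewrite scal_derive1; exact: is_cvg_cst.
- by rewrite scal_derive1; exact: is_cvg_cst.
- split.
  + by move=> x _; exact: scal_derivable.
  + exact/cvg_at_right_filter/scal_cont.
  + exact/cvg_at_left_filter/scal_cont.
- apply: continuous_in_subspaceT => x; rewrite inE /= in_itv /= => /andP[ax xb].
  apply: gc; apply/andP; split.
  + apply: lt_le_trans ax; apply: (@lt_le_trans _ _ 0) => //; exact: mulr_ge0 (ltW l0) a0.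
  + apply: le_lt_trans xb _; apply: le_lt_trans b1.
    by rewrite ler_piMl // (le_trans a0 ab).
Qed.

Definition Fg {R : realType} (g : R -> R) (y : R) := \int[mu]_(t in `[0, y]) g t.

Lemma int_gen {R : realType} (h : R -> R) a b :
  (forall x, a <= x <= b -> {for x, continuous h}) -> mu.-integrable `[a, b] (EFin \o h).
Proof.
move=> hc; apply: continuous_compact_integrable; first exact: segment_compact.
by apply: continuous_in_subspaceT => x; rewrite inE /= in_itv /= => /hc.
Qed.

Lemma cont_gl1 {R : realType} (g : R -> R) (lam u : R) :
  (forall t, -1 < t < 1 -> {for t, continuous g}) ->
  0 <= lam <= 1 -> 0 <= u < 1 -> {for u, continuous (fun u => g (lam * u) * lam)}.
Proof.
move=> gc /andP[l0 l1] /andP[u0 u1].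
apply: (@continuousM _ _ _ (cst lam) u _ (cvg_cst _)).
suff H : {for u, continuous (g \o (fun y : R => lam * y))} by exact: H.
apply: continuous_comp; first exact: scal_cont.
apply: gc; apply/andP; split.
  by apply: (@lt_le_trans _ _ 0) => //; exact: mulr_ge0.
by apply: le_lt_trans u1; rewrite ler_piMl.
Qed.

Lemma cont_gl {R : realType} (g : R -> R) (lam c u : R) :
  (forall t, -1 < t < 1 -> {for t, continuous g}) ->
  0 <= lam <= 1 -> 0 <= u < 1 -> {for u, continuous (fun u => c * (g (lam * u) * lam))}.
Proof.
move=> gc l u1.
apply: (@continuousM _ _ (cst c) _ u (cvg_cst _)); exact: cont_gl1.
Qed.

Lemma cont_gc {R : realType} (g : R -> R) (c u : R) :
  (forall t, -1 < t < 1 -> {for t, continuous g}) ->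
  0 <= u < 1 -> {for u, continuous (fun u => c * g u)}.
Proof.
move=> gc /andP[u0 u1].
apply: (@continuousM _ _ (cst c) _ u (cvg_cst _)).
apply: gc; apply/andP; split => //.
by apply: (@lt_le_trans _ _ 0).
Qed.

Lemma int_gl1 {R : realType} (g : R -> R) (lam a b : R) :
  (forall t, -1 < t < 1 -> {for t, continuous g}) ->
  0 <= lam <= 1 -> 0 <= a -> b < 1 -> mu.-integrable `[a, b] (EFin \o (fun u => g (lam * u) * lam)).
Proof.
move=> gc l a0 b1; apply: int_gen => x /andP[ax xb]; apply: cont_gl1 => //.
apply/andP; split; [exact: le_trans ax|exact: le_lt_trans b1].
Qed.

Lemma int_gl {R : realType} (g : R -> R) (lam c a b : R) :
  (forall t, -1 < t < 1 -> {for t, continuous g}) ->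
  0 <= lam <= 1 -> 0 <= a -> b < 1 -> mu.-integrable `[a, b] (EFin \o (fun u => c * (g (lam * u) * lam))).
Proof.
move=> gc l a0 b1; apply: int_gen => x /andP[ax xb]; apply: cont_gl => //.
apply/andP; split; [exact: le_trans ax|exact: le_lt_trans b1].
Qed.

Lemma int_gc {R : realType} (g : R -> R) (c a b : R) :
  (forall t, -1 < t < 1 -> {for t, continuous g}) ->
  0 <= a -> b < 1 -> mu.-integrable `[a, b] (EFin \o (fun u => c * g u)).
Proof.
move=> gc a0 b1; apply: int_gen => x /andP[ax xb]; apply: cont_gc => //.
apply/andP; split; [exact: le_trans ax|exact: le_lt_trans b1].
Qed.

Lemma F_split {R : realType} (g : R -> R) y1 y2 :
  (forall t, -1 < t < 1 -> {for t, continuous g}) ->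
  0 <= y1 <= y2 -> y2 < 1 -> Fg g y2 - Fg g y1 = \int[mu]_(t in `[y1, y2]) g t.
Proof.
move=> gc /andP[y10 y12] y21; rewrite /Fg.
rewrite (@Rintegral_itvB _ g (BLeft 0) (BRight y2) y1) ?bnd_simp //; last first.
  apply: int_g => //; lra.
rewrite Rintegral_itv_obnd_cbnd //.
apply: (@integrableS _ _ _ mu `[y1, y2]) => //.
- move=> x /=; rewrite !in_itv /= => /andP[a b]; apply/andP; split => //; exact: ltW.
- apply: int_g => //; lra.
Qed.

Lemma F_lam {R : realType} (g : R -> R) lam y :
  (forall t, -1 < t < 1 -> {for t, continuous g}) ->
  0 < lam <= 1 -> 0 <= y < 1 ->
  Fg g (lam * y) = \int[mu]_(t in `[0, y]) (g (lam * t) * lam).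
Proof.
move=> gc l /andP[y0 y1]; rewrite /Fg -(@subst R g lam 0 y gc l _ y1); first by rewrite mulr0.
by rewrite lexx y0.
Qed.

Lemma F_ge0 {R : realType} (g : R -> R) y :
  (forall t, 0 <= t < 1 -> 0 < g t) -> y < 1 -> 0 <= Fg g y.
Proof.
move=> gp y1; apply: Rintegral_ge0 => x /=; rewrite in_itv /= => /andP[a b].
apply/ltW/gp; rewrite a /=; exact: le_lt_trans y1.
Qed.

Lemma mono_cv {R : realType} (g : R -> R) lam y1 y2 :
  (forall t, -1 < t < 1 -> {for t, continuous g}) ->
  (forall t, 0 <= t < 1 -> 0 < g t) ->
  (forall lam t y, 0 < lam <= 1 -> 0 <= t <= y -> y < 1 ->
     g y * g (lam * t) <= g (lam * y) * g t) ->
  0 < lam <= 1 -> 0 < y1 <= y2 -> y2 < 1 ->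
  Fg g (lam * y1) * Fg g y2 <= Fg g (lam * y2) * Fg g y1.
Proof.
move=> gc gp hr l /andP[y10 y12] y21.
have y11 : y1 < 1 by exact: le_lt_trans y21.
have l0 : 0 <= lam by case/andP: l => /ltW.
have stepa : g y1 * Fg g (lam * y1) <= lam * g (lam * y1) * Fg g y1.
  rewrite (@F_lam R g lam y1 gc l); last by rewrite (ltW y10).
  have l' : 0 <= lam <= 1 by case/andP: l => /ltW -> ->.
  rewrite -RintegralZl //; last exact: int_gl1.
  rewrite /Fg -RintegralZl //; last by apply: int_g => //; lra.
  apply: le_Rintegral => //; [exact: int_gl|exact: int_gc|].
  - move=> x /=; rewrite in_itv /= => /andP[x0 x1].
    have := hr lam x y1 l; rewrite x0 x1 => /(_ isT y11) H.
    nra.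
have ly1 : 0 <= lam * y1 by rewrite mulr_ge0 // ltW.
have stepb : Fg g (lam * y1) * (Fg g y2 - Fg g y1) <=
             Fg g y1 * (Fg g (lam * y2) - Fg g (lam * y1)).
  have l' : 0 <= lam <= 1 by case/andP: l => /ltW -> ->.
  rewrite (@F_split R g y1 y2 gc) ?y12 ?(ltW y10) //.
  rewrite (@F_split R g (lam * y1) (lam * y2) gc); last first.
    - by apply: le_lt_trans y21; rewrite ler_piMl //; [lra|case/andP: l].
    - by rewrite ly1 /= ler_pM2l //; case/andP: l.
  rewrite (@subst R g lam y1 y2 gc l); last first.
    - by [].
    - by rewrite (ltW y10).
  rewrite -RintegralZl //; last by apply: int_g => //; lra.
  rewrite -RintegralZl //; last by apply: int_gl1 => //; exact: ltW.
  apply: le_Rintegral => //.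
  - by apply: int_gc => //; exact: ltW.
  - by apply: int_gl => //; exact: ltW.
  - move=> x /=; rewrite in_itv /= => /andP[x0 x1].
    have x01 : x < 1 by exact: le_lt_trans y21.
    have gx0 : 0 < g x by apply: gp; rewrite x01 andbT (le_trans (ltW y10)).
    have gy0 : 0 < g y1 by apply: gp; rewrite y11 andbT ltW.
    have F0 : 0 <= Fg g y1 by apply: F_ge0.
    have := hr lam y1 x l; rewrite (ltW y10) x0 => /(_ isT x01) H.
    rewrite -(ler_pM2l gy0).
    apply: (le_trans (y := lam * g (lam * y1) * Fg g y1 * g x)).
      by rewrite mulrA; apply: ler_wpM2r; [exact: ltW|exact: stepa].
    have LF : 0 <= lam * Fg g y1 by rewrite mulr_ge0.
    have := ler_wpM2l LF H; lra.
nra.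
Qed.

Lemma mono_cx {R : realType} (g : R -> R) lam y1 y2 :
  (forall t, -1 < t < 1 -> {for t, continuous g}) ->
  (forall t, 0 <= t < 1 -> 0 < g t) ->
  (forall lam t y, 0 < lam <= 1 -> 0 <= t <= y -> y < 1 ->
     g (lam * y) * g t <= g y * g (lam * t)) ->
  0 < lam <= 1 -> 0 < y1 <= y2 -> y2 < 1 ->
  Fg g (lam * y2) * Fg g y1 <= Fg g (lam * y1) * Fg g y2.
Proof.
move=> gc gp hr l /andP[y10 y12] y21.
have y11 : y1 < 1 by exact: le_lt_trans y21.
have l0 : 0 <= lam by case/andP: l => /ltW.
have stepa : lam * g (lam * y1) * Fg g y1 <= g y1 * Fg g (lam * y1).
  rewrite (@F_lam R g lam y1 gc l); last by rewrite (ltW y10).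
  have l' : 0 <= lam <= 1 by case/andP: l => /ltW -> ->.
  rewrite -RintegralZl //; last exact: int_gl1.
  rewrite /Fg -RintegralZl //; last by apply: int_g => //; lra.
  apply: le_Rintegral => //; [exact: int_gc|exact: int_gl|].
  - move=> x /=; rewrite in_itv /= => /andP[x0 x1].
    have := hr lam x y1 l; rewrite x0 x1 => /(_ isT y11) H.
    nra.
have ly1 : 0 <= lam * y1 by rewrite mulr_ge0 // ltW.
have stepb : Fg g y1 * (Fg g (lam * y2) - Fg g (lam * y1)) <=
             Fg g (lam * y1) * (Fg g y2 - Fg g y1).
  have l' : 0 <= lam <= 1 by case/andP: l => /ltW -> ->.
  rewrite (@F_split R g y1 y2 gc) ?y12 ?(ltW y10) //.
  rewrite (@F_split R g (lam * y1) (lam * y2) gc); last first.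
    - by apply: le_lt_trans y21; rewrite ler_piMl //; [lra|case/andP: l].
    - by rewrite ly1 /= ler_pM2l //; case/andP: l.
  rewrite (@subst R g lam y1 y2 gc l); last first.
    - by [].
    - by rewrite (ltW y10).
  rewrite -RintegralZl //; last by apply: int_gl1 => //; exact: ltW.
  rewrite -RintegralZl //; last by apply: int_g => //; lra.
  apply: le_Rintegral => //.
  - by apply: int_gl => //; exact: ltW.
  - by apply: int_gc => //; exact: ltW.
  - move=> x /=; rewrite in_itv /= => /andP[x0 x1].
    have x01 : x < 1 by exact: le_lt_trans y21.
    have gx0 : 0 < g x by apply: gp; rewrite x01 andbT (le_trans (ltW y10)).
    have gy0 : 0 < g y1 by apply: gp; rewrite y11 andbT ltW.
    have F0 : 0 <= Fg g y1 by apply: F_ge0.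
    have := hr lam y1 x l; rewrite (ltW y10) x0 => /(_ isT x01) H.
    rewrite -(ler_pM2l gy0).
    apply: (le_trans (y := lam * g (lam * y1) * Fg g y1 * g x)); last first.
      by rewrite mulrA; apply: ler_wpM2r; [exact: ltW|exact: stepa].
    have LF : 0 <= lam * Fg g y1 by rewrite mulr_ge0.
    have := ler_wpM2l LF H; lra.
nra.
Qed.

Lemma Rint1 {R : realType} (r : R) : 0 <= r -> \int[mu]_(t in `[0, r]) (1 : R) = r.
Proof.
move=> r0; rewrite Rintegral_cst // mul1r.
have := @lebesgue_measure_itv R `[0, r]%R; rewrite /= => ->.
case: ifPn; first by rewrite sube0 /=.
rewrite lte_fin -leNgt => r0'; have -> : r = 0 by apply/eqP; rewrite eq_le r0' r0.
by [].
Qed.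

Lemma ineq1_cx {R : realType} (g : R -> R) r s :
  (forall t, -1 < t < 1 -> {for t, continuous g}) ->
  (forall t, 0 <= t < 1 -> 0 < g t) ->
  (forall lam t y, 0 < lam <= 1 -> 0 <= t <= y -> y < 1 ->
     g (lam * y) * g t <= g y * g (lam * t)) ->
  0 < r < 1 -> 0 < s < 1 -> Fg g (r * s) ^+ 2 <= Fg g (r * r) * Fg g (s * s).
Proof.
move=> gc gp hr.
wlog rs : r s / r <= s.
  move=> W hr1 hs1; case: (lerP r s) => [rs|sr]; first exact: W.
  rewrite mulrC [X in _ <= X]mulrC; apply: W => //; exact: ltW.
move=> /andP[r0 r1] /andP[s0 s1].
have s0' : s != 0 by rewrite gt_eqF.
have := @mono_cx R g (r / s) (r * s) (s * s) gc gp hr.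
have -> : r / s * (s * s) = r * s by field.
have -> : r / s * (r * s) = r * r by field.
rewrite expr2; apply.
- by rewrite divr_gt0 //= ler_pdivrMr // mul1r.
- by rewrite mulr_gt0 //= ler_pM2r.
- by rewrite mulr_ilt1 // ltW.
Qed.

Lemma ineq1_cv {R : realType} (g : R -> R) r s :
  (forall t, -1 < t < 1 -> {for t, continuous g}) ->
  (forall t, 0 <= t < 1 -> 0 < g t) ->
  (forall lam t y, 0 < lam <= 1 -> 0 <= t <= y -> y < 1 ->
     g y * g (lam * t) <= g (lam * y) * g t) ->
  0 < r < 1 -> 0 < s < 1 -> Fg g (r * r) * Fg g (s * s) <= Fg g (r * s) ^+ 2.
Proof.
move=> gc gp hr.
wlog rs : r s / r <= s.
  move=> W hr1 hs1; case: (lerP r s) => [rs|sr]; first exact: W.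
  rewrite mulrC [in X in _ <= X]mulrC; apply: W => //; exact: ltW.
move=> /andP[r0 r1] /andP[s0 s1].
have s0' : s != 0 by rewrite gt_eqF.
have := @mono_cv R g (r / s) (r * s) (s * s) gc gp hr.
have -> : r / s * (s * s) = r * s by field.
have -> : r / s * (r * s) = r * r by field.
rewrite expr2; apply.
- by rewrite divr_gt0 //= ler_pdivrMr // mul1r.
- by rewrite mulr_gt0 //= ler_pM2r.
- by rewrite mulr_ilt1 // ltW.
Qed.

Lemma ineq2_cx {R : realType} (g : R -> R) r :
  (forall t, -1 < t < 1 -> {for t, continuous g}) ->
  (forall t, 0 <= t < 1 -> 1 <= g t) ->
  (forall lam t, 0 < lam <= 1 -> 0 <= t < 1 -> g (lam * t) <= g t) ->
  0 < r < 1 -> Fg g (r * r) <= Fg g r ^+ 2.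
Proof.
move=> gc g1 gm /andP[r0 r1].
have rl : 0 < r <= 1 by rewrite r0 ltW.
have rle : r <= Fg g r.
  rewrite -[X in X <= _](@Rint1 R r (ltW r0)) /Fg; apply: le_Rintegral => //.
  - by apply: int_gen => x _; exact: cvg_cst.
  - by apply: int_g => //; lra.
  - move=> x /=; rewrite in_itv /= => /andP[x0 x1]; apply: g1; rewrite x0 /=.
    exact: le_lt_trans r1.
rewrite (@F_lam R g r r gc rl); last by rewrite ltW.
apply: (@le_trans _ _ (r * Fg g r)); last by rewrite expr2 ler_wpM2r // (le_trans _ rle) // ltW.
rewrite /Fg -RintegralZl //; last by apply: int_g => //; lra.
apply: le_Rintegral => //.
- by apply: int_gl1 => //; rewrite (ltW r0) (ltW r1).
- by apply: int_gc => //.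
- move=> x /=; rewrite in_itv /= => /andP[x0 x1]; rewrite mulrC.
  apply: ler_wpM2l; first exact: ltW.
  apply: gm => //; rewrite x0 /=; exact: le_lt_trans r1.
Qed.

Lemma ineq2_cv {R : realType} (g : R -> R) r :
  (forall t, -1 < t < 1 -> {for t, continuous g}) ->
  (forall t, 0 <= t < 1 -> 0 < g t <= 1) ->
  (forall lam t, 0 < lam <= 1 -> 0 <= t < 1 -> g t <= g (lam * t)) ->
  0 < r < 1 -> Fg g r ^+ 2 <= Fg g (r * r).
Proof.
move=> gc g1 gm /andP[r0 r1].
have rl : 0 < r <= 1 by rewrite r0 ltW.
have rle : Fg g r <= r.
  rewrite -[X in _ <= X](@Rint1 R r (ltW r0)) /Fg; apply: le_Rintegral => //.
  - by apply: int_g => //; lra.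
  - by apply: int_gen => x _; exact: cvg_cst.
  - move=> x /=; rewrite in_itv /= => /andP[x0 x1].
    have xx : 0 <= x < 1 by rewrite x0 /=; exact: le_lt_trans r1.
    by case/andP: (g1 x xx).
have F0 : 0 <= Fg g r.
  by apply: F_ge0 => // t tt; case/andP: (g1 t tt).
rewrite (@F_lam R g r r gc rl); last by rewrite ltW.
apply: (@le_trans _ _ (r * Fg g r)); first by rewrite expr2 ler_wpM2r.
rewrite /Fg -RintegralZl //; last by apply: int_g => //; lra.
apply: le_Rintegral => //.
- by apply: int_gc => //.
- by apply: int_gl1 => //; rewrite (ltW r0) (ltW r1).
- move=> x /=; rewrite in_itv /= => /andP[x0 x1]; rewrite [X in _ <= X]mulrC.
  apply: ler_wpM2l; first exact: ltW.
  apply: gm => //; rewrite x0 /=; exact: le_lt_trans r1.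
Qed.

Lemma absp_cont {R : realType} (p t : R) : 0 < p -> {for t, continuous (fun t : R => `|t| `^ p)}.
Proof.
move=> p0; have [->|t0] := eqVneq t 0.
- apply/cvgrPdist_lt => e e0.
  have d0 : 0 < e `^ p^-1 by rewrite powR_gt0.
  near=> x. rewrite normr0 powR0 ?gt_eqF // sub0r normrN ger0_norm ?powR_ge0 //.
  have : `|x| < e `^ p^-1 by near: x; apply/nbhs_ballP; exists (e `^ p^-1) => //= y; rewrite /ball /= sub0r normrN.
  move=> h; have := @gt0_ltr_powR R p p0 `|x| (e `^ p^-1).
  rewrite !nnegrE normr_ge0 ltW // => /(_ isT isT h).
  by rewrite -powRrM mulVf ?gt_eqF // powRr1 // ltW.
- suff H : {for t, continuous ((fun a : R => a `^ p) \o (fun t : R => `|t|))} by exact: H.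
  apply: continuous_comp; first exact: norm_continuous.
  apply/differentiable_continuous/derivable1_diffP/derivable_powR.
  by rewrite in_itv /= normr_gt0 t0.
Unshelve. all: end_near. Qed.

Definition gi {R : realType} (sg q p : R) (t : R) := ((1 + sg * `|t| `^ p) `^ q)^-1.

Lemma gi_cont {R : realType} (sg q p : R) : 0 < q -> 0 < p ->
  (forall t, -1 < t < 1 -> 0 < 1 + sg * `|t| `^ p) ->
  forall t, -1 < t < 1 -> {for t, continuous (gi sg q p)}.
Proof.
move=> q0 p0 h t tt; have th := h t tt.
apply: continuousV; first by rewrite gt_eqF // powR_gt0.
suff H : {for t, continuous ((fun a : R => a `^ q) \o (fun t : R => 1 + sg * `|t| `^ p))} by exact: H.
apply: continuous_comp.
  have H1 : {for t, continuous (fun t : R => sg * `|t| `^ p)}.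
    apply: (@continuousM _ _ (cst sg) (fun t => `|t| `^ p)); first exact: cvg_cst.
    exact: absp_cont.
  have H2 := @continuousD R R^o R (cst 1) (fun t : R => sg * `|t| `^ p) t (cvg_cst _) H1.
  exact: H2.
apply/differentiable_continuous/derivable1_diffP/derivable_powR.
by rewrite in_itv /= th.
Qed.

Lemma ipow_le {R : realType} (a c q : R) : 0 < q -> 0 < a -> a <= c ->
  (c `^ q)^-1 <= (a `^ q)^-1.
Proof.
move=> q0 a0 ac; have c0 : 0 < c by exact: lt_le_trans ac.
rewrite lef_pV2 ?posrE ?powR_gt0 //.
by apply: ge0_ler_powR => //; [exact: ltW|rewrite nnegrE ltW|rewrite nnegrE ltW].
Qed.

Lemma ipow_le2 {R : realType} (a b c d q : R) : 0 < q -> 0 < a -> 0 < b -> 0 < c -> 0 < d ->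
  a * b <= c * d -> (c `^ q)^-1 * (d `^ q)^-1 <= (a `^ q)^-1 * (b `^ q)^-1.
Proof.
move=> q0 a0 b0 c0 d0 h.
rewrite -invfM -powRM ?(ltW c0) ?(ltW d0) // -invfM -powRM ?(ltW a0) ?(ltW b0) //.
by apply: ipow_le => //; exact: mulr_gt0.
Qed.

Lemma powM_ge0 {R : realType} (lam t p : R) : 0 <= lam -> 0 <= t ->
  `|lam * t| `^ p = lam `^ p * t `^ p.
Proof. by move=> l0 t0; rewrite ger0_norm ?mulr_ge0 // powRM. Qed.

Lemma pow_lt1 {R : realType} (t p : R) : 0 < p -> 0 <= t < 1 -> t `^ p < 1.
Proof.
move=> p0 /andP[t0 t1]; have := @gt0_ltr_powR R p p0 t 1.
rewrite !nnegrE t0 ler01 powR1 => /(_ isT isT t1) //.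
Qed.

Lemma pow_le1 {R : realType} (t p : R) : 0 < p -> 0 <= t <= 1 -> t `^ p <= 1.
Proof.
move=> p0 /andP[t0 t1]; have := @ge0_ler_powR R p (ltW p0) t 1.
rewrite !nnegrE t0 ler01 powR1 => /(_ isT isT t1) //.
Qed.

Lemma pow_mono {R : realType} (t y p : R) : 0 < p -> 0 <= t <= y -> t `^ p <= y `^ p.
Proof.
move=> p0 /andP[t0 ty].
have t' : t \in Num.nneg by rewrite nnegrE.
have y' : y \in Num.nneg by rewrite nnegrE (le_trans t0 ty).
exact: (ge0_ler_powR (ltW p0) t' y' ty).
Qed.

Section Inst.
End Inst.

Lemma cx_theta {R : realType} (p : R) : 0 < p ->
  forall t, -1 < t < 1 -> 0 < 1 + (-1) * `|t| `^ p.
Proof.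
move=> p0 t tt; have : `|t| `^ p < 1 by apply: pow_lt1 => //; rewrite normr_ge0 /= ltr_norml.
lra.
Qed.

Lemma cv_theta {R : realType} (p : R) : forall t : R, -1 < t < 1 -> 0 < 1 + 1 * `|t| `^ p.
Proof. by move=> t _; rewrite mul1r; have := powR_ge0 `|t| p; lra. Qed.

Lemma gi_pos {R : realType} (sg q p : R) :
  (forall t, -1 < t < 1 -> 0 < 1 + sg * `|t| `^ p) ->
  forall t, 0 <= t < 1 -> 0 < gi sg q p t.
Proof.
move=> h t /andP[t0 t1]; rewrite /gi invr_gt0 powR_gt0 // h //; apply/andP; split => //.
by apply: (@lt_le_trans _ _ 0).
Qed.

Lemma cx_ge1 {R : realType} (q p : R) : 0 < q -> 0 < p ->
  forall t, 0 <= t < 1 -> 1 <= gi (-1) q p t.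
Proof.
move=> q0 p0 t /andP[t0 t1].
have th := @cx_theta R p p0 t; rewrite t1 andbT in th.
have {th} th := th (lt_le_trans (ltrN10 R) t0).
have := @ipow_le R (1 + (-1) * `|t| `^ p) 1 q q0 th.
rewrite powR1 /= invr1; apply; have := powR_ge0 `|t| p; lra.
Qed.

Lemma cv_le1 {R : realType} (q p : R) : 0 < q ->
  forall t, 0 <= t < 1 -> 0 < gi 1 q p t <= 1.
Proof.
move=> q0 t tt; rewrite (@gi_pos R 1 q p (@cv_theta R p)) //=.
have := @ipow_le R 1 (1 + 1 * `|t| `^ p) q q0 ltr01.
rewrite powR1 /= invr1; apply; have := powR_ge0 `|t| p; lra.
Qed.

Lemma cx_gm {R : realType} (q p : R) : 0 < q -> 0 < p ->
  forall lam t, 0 < lam <= 1 -> 0 <= t < 1 -> gi (-1) q p (lam * t) <= gi (-1) q p t.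
Proof.
move=> q0 p0 lam t /andP[l0 l1] /andP[t0 t1].
rewrite /gi powM_ge0 ?(ltW l0) // ger0_norm //.
apply: ipow_le => //.
  by have := @cx_theta R p p0 t; rewrite ger0_norm // t1 andbT; apply; apply: (@lt_le_trans _ _ 0).
have L1 : lam `^ p <= 1 by apply: pow_le1 => //; rewrite (ltW l0).
have := powR_ge0 t p; have := powR_ge0 lam p; nra.
Qed.

Lemma cv_gm {R : realType} (q p : R) : 0 < q -> 0 < p ->
  forall lam t, 0 < lam <= 1 -> 0 <= t < 1 -> gi 1 q p t <= gi 1 q p (lam * t).
Proof.
move=> q0 p0 lam t /andP[l0 l1] /andP[t0 t1].
rewrite /gi powM_ge0 ?(ltW l0) // ger0_norm //.
apply: ipow_le => //.
  by have := powR_ge0 t p; have := powR_ge0 lam p; nra.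
have L1 : lam `^ p <= 1 by apply: pow_le1 => //; rewrite (ltW l0).
have := powR_ge0 t p; have := powR_ge0 lam p; nra.
Qed.

Lemma cx_ratio {R : realType} (q p : R) : 0 < q -> 0 < p ->
  forall lam t y, 0 < lam <= 1 -> 0 <= t <= y -> y < 1 ->
     gi (-1) q p (lam * y) * gi (-1) q p t <= gi (-1) q p y * gi (-1) q p (lam * t).
Proof.
move=> q0 p0 lam t y /andP[l0 l1] /andP[t0 ty] y1.
have y0 : 0 <= y by exact: le_trans ty.
rewrite /gi !powM_ge0 ?(ltW l0) // !ger0_norm //.
have L1 : lam `^ p <= 1 by apply: pow_le1 => //; rewrite (ltW l0).
have L0 := powR_ge0 lam p.
have T0 := powR_ge0 t p.
have TY : t `^ p <= y `^ p by apply: pow_mono => //; rewrite t0.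
have Y1 : y `^ p < 1 by apply: pow_lt1 => //; rewrite y0.
apply: ipow_le2 => //; try nra.
Qed.

Lemma cv_ratio {R : realType} (q p : R) : 0 < q -> 0 < p ->
  forall lam t y, 0 < lam <= 1 -> 0 <= t <= y -> y < 1 ->
     gi 1 q p y * gi 1 q p (lam * t) <= gi 1 q p (lam * y) * gi 1 q p t.
Proof.
move=> q0 p0 lam t y /andP[l0 l1] /andP[t0 ty] y1.
have y0 : 0 <= y by exact: le_trans ty.
rewrite /gi !powM_ge0 ?(ltW l0) // !ger0_norm //.
have L1 : lam `^ p <= 1 by apply: pow_le1 => //; rewrite (ltW l0).
have L0 := powR_ge0 lam p.
have T0 := powR_ge0 t p.
have TY : t `^ p <= y `^ p by apply: pow_mono => //; rewrite t0.
apply: ipow_le2 => //; try nra.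
Qed.

Lemma final_cx {R : realType} (g : R -> R) r s :
  (forall t, -1 < t < 1 -> {for t, continuous g}) ->
  (forall t, 0 <= t < 1 -> 0 < g t) ->
  (forall lam t y, 0 < lam <= 1 -> 0 <= t <= y -> y < 1 ->
     g (lam * y) * g t <= g y * g (lam * t)) ->
  (forall t, 0 <= t < 1 -> 1 <= g t) ->
  (forall lam t, 0 < lam <= 1 -> 0 <= t < 1 -> g (lam * t) <= g t) ->
  0 < r < 1 -> 0 < s < 1 ->
  Fg g (r * s) <= Num.sqrt (Fg g (r ^+ 2) * Fg g (s ^+ 2)) <= Fg g r * Fg g s.
Proof.
move=> gc gp hr g1 gm hr1 hs1.
have [r0 r1] := andP hr1; have [s0 s1] := andP hs1.
have F0 : forall y, y < 1 -> 0 <= Fg g y by move=> y; apply: F_ge0.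
rewrite !expr2.
have Frs := F0 (r * s) (mulr_ilt1 (ltW r0) (ltW s0) r1 s1).
have Frr := F0 (r * r) (mulr_ilt1 (ltW r0) (ltW r0) r1 r1).
have Fss := F0 (s * s) (mulr_ilt1 (ltW s0) (ltW s0) s1 s1).
have Fr := F0 r r1; have Fs := F0 s s1.
apply/andP; split.
- rewrite -[X in X <= _](ger0_norm Frs) -sqrtr_sqr ler_sqrt ?mulr_ge0 //.
  exact: ineq1_cx.
- rewrite -[X in _ <= X](ger0_norm (mulr_ge0 Fr Fs)) -sqrtr_sqr ler_sqrt ?exprn_ge0 ?mulr_ge0 //.
  rewrite exprMn; apply: ler_pM => //; exact: ineq2_cx.
Qed.

Lemma final_cv {R : realType} (g : R -> R) r s :
  (forall t, -1 < t < 1 -> {for t, continuous g}) ->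
  (forall t, 0 <= t < 1 -> 0 < g t) ->
  (forall lam t y, 0 < lam <= 1 -> 0 <= t <= y -> y < 1 ->
     g y * g (lam * t) <= g (lam * y) * g t) ->
  (forall t, 0 <= t < 1 -> 0 < g t <= 1) ->
  (forall lam t, 0 < lam <= 1 -> 0 <= t < 1 -> g t <= g (lam * t)) ->
  0 < r < 1 -> 0 < s < 1 ->
  Fg g r * Fg g s <= Num.sqrt (Fg g (r ^+ 2) * Fg g (s ^+ 2)) <= Fg g (r * s).
Proof.
move=> gc gp hr g1 gm hr1 hs1.
have [r0 r1] := andP hr1; have [s0 s1] := andP hs1.
have F0 : forall y, y < 1 -> 0 <= Fg g y by move=> y; apply: F_ge0.
rewrite !expr2.
have Frs := F0 (r * s) (mulr_ilt1 (ltW r0) (ltW s0) r1 s1).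
have Frr := F0 (r * r) (mulr_ilt1 (ltW r0) (ltW r0) r1 r1).
have Fss := F0 (s * s) (mulr_ilt1 (ltW s0) (ltW s0) s1 s1).
have Fr := F0 r r1; have Fs := F0 s s1.
apply/andP; split.
- rewrite -[X in X <= _](ger0_norm (mulr_ge0 Fr Fs)) -sqrtr_sqr ler_sqrt ?mulr_ge0 //.
  rewrite exprMn; apply: ler_pM; rewrite ?exprn_ge0 //; exact: ineq2_cv.
- rewrite -[X in _ <= X](ger0_norm Frs) -sqrtr_sqr ler_sqrt ?exprn_ge0 //.
  exact: ineq1_cv.
Qed.

Lemma eq_asin {R : realType} (p y : R) : 0 < p -> 0 <= y ->
  arcsin_p p y = Fg (gi (-1) p^-1 p) y.
Proof.
move=> p0 y0; rewrite /arcsin_p /Fg; apply: eq_Rintegral => t.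
rewrite inE /= in_itv /= => /andP[t0 _].
by rewrite /gi ger0_norm // mulN1r powRN.
Qed.

Lemma eq_asinh {R : realType} (p y : R) : 0 < p -> 0 <= y ->
  arsinh_p p y = Fg (gi 1 p^-1 p) y.
Proof.
move=> p0 y0; rewrite /arsinh_p /Fg; apply: eq_Rintegral => t.
rewrite inE /= in_itv /= => /andP[t0 _].
by rewrite /gi ger0_norm // mul1r powRN.
Qed.

Lemma eq_atanh {R : realType} (p y : R) : 0 < p -> 0 <= y < 1 ->
  artanh_p p y = Fg (gi (-1) 1 p) y.
Proof.
move=> p0 /andP[y0 y1]; rewrite /artanh_p /Fg; apply: eq_Rintegral => t.
rewrite inE /= in_itv /= => /andP[t0 ty].
have : t `^ p < 1 by apply: pow_lt1 => //; rewrite t0 (le_lt_trans ty y1).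
by move=> h; rewrite /gi ger0_norm // mulN1r powRr1 //; lra.
Qed.

Lemma eq_atan {R : realType} (p y : R) : 0 < p -> 0 <= y ->
  arctan_p p y = Fg (gi 1 1 p) y.
Proof.
move=> p0 y0; rewrite /arctan_p /Fg; apply: eq_Rintegral => t.
rewrite inE /= in_itv /= => /andP[t0 _].
have := powR_ge0 t p.
by move=> h; rewrite /gi ger0_norm // mul1r powRr1 //; lra.
Qed.

Theorem theorem2p5 (R : realType) (p r s : R) :
  1 < p -> 0 < r < 1 -> 0 < s < 1 ->
  [/\ arcsin_p p (r * s) <= Num.sqrt (arcsin_p p (r ^+ 2) * arcsin_p p (s ^+ 2))
        <= arcsin_p p r * arcsin_p p s,
      artanh_p p (r * s) <= Num.sqrt (artanh_p p (r ^+ 2) * artanh_p p (s ^+ 2))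
        <= artanh_p p r * artanh_p p s,
      arsinh_p p r * arsinh_p p s
        <= Num.sqrt (arsinh_p p (r ^+ 2) * arsinh_p p (s ^+ 2)) <= arsinh_p p (r * s)
    & arctan_p p r * arctan_p p s
        <= Num.sqrt (arctan_p p (r ^+ 2) * arctan_p p (s ^+ 2)) <= arctan_p p (r * s)].
Proof.
move=> p1 hr hs.
have p0 : 0 < p by lra.
have q0 : 0 < p^-1 by rewrite invr_gt0.
have [r0 r1] := andP hr; have [s0 s1] := andP hs.
have rs0 : 0 <= r * s by rewrite mulr_ge0 // ltW.
have rs1 : r * s < 1 by rewrite mulr_ilt1 // ltW.
have rr0 : 0 <= r ^+ 2 by rewrite exprn_ge0 // ltW.
have rr1 : r ^+ 2 < 1 by rewrite expr2 mulr_ilt1 // ltW.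
have ss0 : 0 <= s ^+ 2 by rewrite exprn_ge0 // ltW.
have ss1 : s ^+ 2 < 1 by rewrite expr2 mulr_ilt1 // ltW.
split.
- rewrite !eq_asin // ?rs0 ?rr0 ?ss0 ?(ltW r0) ?(ltW s0) //.
  exact: (@final_cx R (gi (-1) p^-1 p) r s
    (@gi_cont R (-1) p^-1 p q0 p0 (@cx_theta R p p0))
    (@gi_pos R (-1) p^-1 p (@cx_theta R p p0))
    (@cx_ratio R p^-1 p q0 p0) (@cx_ge1 R p^-1 p q0 p0) (@cx_gm R p^-1 p q0 p0) hr hs).
- rewrite !eq_atanh // ?rs0 ?rr0 ?ss0 ?(ltW r0) ?(ltW s0) ?rs1 ?rr1 ?ss1 ?r1 ?s1 //.
  exact: (@final_cx R (gi (-1) 1 p) r s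
    (@gi_cont R (-1) 1 p ltr01 p0 (@cx_theta R p p0))
    (@gi_pos R (-1) 1 p (@cx_theta R p p0))
    (@cx_ratio R 1 p ltr01 p0) (@cx_ge1 R 1 p ltr01 p0) (@cx_gm R 1 p ltr01 p0) hr hs).
- rewrite !eq_asinh // ?rs0 ?rr0 ?ss0 ?(ltW r0) ?(ltW s0) //.
  exact: (@final_cv R (gi 1 p^-1 p) r s
    (@gi_cont R 1 p^-1 p q0 p0 (@cv_theta R p))
    (@gi_pos R 1 p^-1 p (@cv_theta R p))
    (@cv_ratio R p^-1 p q0 p0) (@cv_le1 R p^-1 p q0) (@cv_gm R p^-1 p q0 p0) hr hs).
- rewrite !eq_atan // ?rs0 ?rr0 ?ss0 ?(ltW r0) ?(ltW s0) //.
  exact: (@final_cv R (gi 1 1 p) r s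
    (@gi_cont R 1 1 p ltr01 p0 (@cv_theta R p))
    (@gi_pos R 1 1 p (@cv_theta R p))
    (@cv_ratio R 1 p ltr01 p0) (@cv_le1 R 1 p ltr01) (@cv_gm R 1 p ltr01 p0) hr hs).
Qed.
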